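(* Consider the causal directed acyclic graph $G_a$ on the variables $X, D, S, Y, K_D, K_S$ whose edges are exactly $X \to D$, $D \to Y$, $X \to S$, $S \to Y$, $K_D \to X$, $K_D \to Y$, $K_S \to X$, $K_S \to Y$, and suppose that only $X$, $D$ and $Y$ are observed (i.e. $S$, $K_D$, $K_S$ are unobserved). Then the interventional distribution $P(y \mid do(x))$ is not identifiable from the joint distribution of the observed variables $(X, D, Y)$.
   Context: A causal model over a DAG: each variable is generated from its parents in the graph and independent exogenous noise; $P(y \mid do(x))$ denotes the distribution of $Y$ after setting $X = x$ by intervention (removing all edges into $X$). ''Identifiable'' means that $P(y\mid do(x))$ is uniquely determined by the joint distribution of the observed variables for every causal model compatible with the graph (with strictly positive observational distribution). Interpretation in the paper: $X$ is a blurry image, $D$ a pixel-level feature, $S$ a semantic-level feature, $Y$ the restored image, and $K_D$, $K_S$ the complete pixel-level and semantic-level knowledge contained in $X$. *)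

(* Defs.v *)
From HB Require Import structures.
From mathcomp Require Import all_boot all_order all_algebra.
From mathcomp Require Import reals.
Set Implicit Arguments. Unset Strict Implicit. Unset Printing Implicit Defensive.
Import Order.TTheory GRing.Theory Num.Theory.
Local Open Scope ring_scope.

Definition is_pmf (R : numDomainType) (U : finType) (p : U -> R) : Prop :=
  (forall u, 0 <= p u) /\ \sum_(u : U) p u = 1.

(* A (discrete, finite-valued) structural causal model compatible with the
   DAG G_a: edges X->D, D->Y, X->S, S->Y, K_D->X, K_D->Y, K_S->X, K_S->Y.
   Each variable is a function of its parents and of its own exogenous
   noise; the six noises are mutually independent with pmfs pV.
   The observed variables X, D, Y have value types TX, TD, TY; the latent
   variables S, K_D, K_S have value types given by the model. *)
Record scm (R : realType) (TX TD TY : finType) := SCM {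
  TS : finType; TKD : finType; TKS : finType;
  UX : finType; UD : finType; US : finType; UY : finType;
  UKD : finType; UKS : finType;
  pX : UX -> R; pD : UD -> R; pS : US -> R; pY : UY -> R;
  pKD : UKD -> R; pKS : UKS -> R;
  pX_pmf : is_pmf pX; pD_pmf : is_pmf pD; pS_pmf : is_pmf pS;
  pY_pmf : is_pmf pY; pKD_pmf : is_pmf pKD; pKS_pmf : is_pmf pKS;
  fKD : UKD -> TKD;
  fKS : UKS -> TKS;
  fX : TKD -> TKS -> UX -> TX;
  fD : TX -> UD -> TD;
  fS : TX -> US -> TS;
  fY : TD -> TS -> TKD -> TKS -> UY -> TY
}.

Arguments TS {R TX TD TY} s.
Arguments TKD {R TX TD TY} s.
Arguments TKS {R TX TD TY} s.
Arguments UX {R TX TD TY} s.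
Arguments UD {R TX TD TY} s.
Arguments US {R TX TD TY} s.
Arguments UY {R TX TD TY} s.
Arguments UKD {R TX TD TY} s.
Arguments UKS {R TX TD TY} s.
Arguments pX {R TX TD TY} s.
Arguments pD {R TX TD TY} s.
Arguments pS {R TX TD TY} s.
Arguments pY {R TX TD TY} s.
Arguments pKD {R TX TD TY} s.
Arguments pKS {R TX TD TY} s.
Arguments pX_pmf {R TX TD TY} s.
Arguments pD_pmf {R TX TD TY} s.
Arguments pS_pmf {R TX TD TY} s.
Arguments pY_pmf {R TX TD TY} s.
Arguments pKD_pmf {R TX TD TY} s.
Arguments pKS_pmf {R TX TD TY} s.
Arguments fKD {R TX TD TY} s.
Arguments fKS {R TX TD TY} s.
Arguments fX {R TX TD TY} s.
Arguments fD {R TX TD TY} s.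
Arguments fS {R TX TD TY} s.
Arguments fY {R TX TD TY} s.

Definition obs_prob (R : realType) (TX TD TY : finType) (M : scm R TX TD TY)
  (x : TX) (d : TD) (y : TY) : R :=
  \sum_(ukd : UKD M) \sum_(uks : UKS M) \sum_(ux : UX M)
  \sum_(ud : UD M) \sum_(us : US M) \sum_(uy : UY M)
    (pKD M ukd * pKS M uks * pX M ux * pD M ud * pS M us * pY M uy) *
    (let kd := fKD M ukd in let ks := fKS M uks in
     let vx := fX M kd ks ux in
     let vd := fD M vx ud in let vs := fS M vx us in
     let vy := fY M vd vs kd ks uy in
     ((vx == x) && (vd == d) && (vy == y))%:R).

(* Interventional distribution P(Y = y | do(X = x)): the mechanism of X is
   replaced by the constant x (all edges into X removed). *)
Definition do_prob (R : realType) (TX TD TY : finType) (M : scm R TX TD TY)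
  (x : TX) (y : TY) : R :=
  \sum_(ukd : UKD M) \sum_(uks : UKS M) \sum_(ux : UX M)
  \sum_(ud : UD M) \sum_(us : US M) \sum_(uy : UY M)
    (pKD M ukd * pKS M uks * pX M ux * pD M ud * pS M us * pY M uy) *
    (let kd := fKD M ukd in let ks := fKS M uks in
     let vd := fD M x ud in let vs := fS M x us in
     let vy := fY M vd vs kd ks uy in
     (vy == y)%:R).

(* Main.v *)
Require Import Defs.
From HB Require Import structures.
From mathcomp Require Import all_boot all_order all_algebra.
From mathcomp Require Import reals.
From mathcomp Require Import lra.
Import Order.TTheory GRing.Theory Num.Theory.
Local Open Scope ring_scope.

Section Aux.
Variable R : realType.

Lemma sum_unit (F : unit -> R) : \sum_(u : unit) F u = F tt.
Proof. by rewrite (big_pred1 tt) // => -[]. Qed.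

Lemma sum_bool (F : bool -> R) : \sum_(u : bool) F u = F true + F false.
Proof. by rewrite big_bool. Qed.

Definition pq (b : bool) : R := if b then 1/4 else 3/4.
Definition ph (b : bool) : R := 1/2.
Definition p1 (b : unit) : R := 1.

Lemma pq_pmf : is_pmf pq.
Proof. split; first by case; rewrite /pq; lra. rewrite sum_bool /pq; lra. Qed.
Lemma ph_pmf : is_pmf ph.
Proof. split; first by case; rewrite /ph; lra. rewrite sum_bool /ph; lra. Qed.
Lemma p1_pmf : is_pmf p1.
Proof. split; first by case; rewrite /p1; lra. rewrite sum_unit /p1; lra. Qed.

Definition M1 : scm R bool unit bool :=
  @SCM R bool unit bool unit unit unit bool unit unit bool unit unit
    ph p1 p1 pq p1 p1 ph_pmf p1_pmf p1_pmf pq_pmf p1_pmf p1_pmf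
    id id (fun _ _ ux => ux) (fun _ _ => tt) (fun _ _ => tt)
    (fun _ _ _ _ uy => uy).

Definition M2 : scm R bool unit bool :=
  @SCM R bool unit bool bool bool unit bool unit unit unit bool unit
    pq p1 p1 p1 ph p1 pq_pmf p1_pmf p1_pmf p1_pmf ph_pmf p1_pmf
    id id (fun kd _ ux => addb kd ux) (fun _ _ => tt) (fun x _ => x)
    (fun _ s kd _ _ => addb s kd).
End Aux.

Theorem mainTheorem1 (R : realType) :
  exists (TX TD TY : finType) (M1 M2 : scm R TX TD TY),
    (forall x d y, 0 < obs_prob M1 x d y) /\
    (forall x d y, 0 < obs_prob M2 x d y) /\
    (forall x d y, obs_prob M1 x d y = obs_prob M2 x d y) /\
    exists (x : TX) (y : TY), do_prob M1 x y <> do_prob M2 x y.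
Proof.
exists bool, unit, bool, (M1 R), (M2 R).
rewrite /obs_prob /do_prob /=.
split; [|split; [|split]].
- move=> [] [] [];
  do 4 rewrite ?sum_unit ?sum_bool /=; rewrite /ph /pq /p1 /=; lra.
- move=> [] [] [];
  do 4 rewrite ?sum_unit ?sum_bool /=; rewrite /ph /pq /p1 /=; lra.
- move=> [] [] [];
  do 4 rewrite ?sum_unit ?sum_bool /=; rewrite /ph /pq /p1 /=; lra.
- exists true, true.
  do 4 rewrite ?sum_unit ?sum_bool /=; rewrite /ph /pq /p1 /=; lra.
Qed.
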